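(* Every direct summand of a semi-generalized Bassian group is semi-generalized Bassian.
   Context: All groups are additively written abelian groups. A subgroup $H$ of a group $A$ is essential in $A$ if $H \cap S \neq \{0\}$ for every non-zero subgroup $S$ of $A$. A group $G$ is semi-generalized Bassian if, for every subgroup $H \le G$, the existence of an injective homomorphism $G \to G/H$ implies that $H$ is an essential subgroup of some direct summand of $G$. *)

(* Defs.v *)
From HB Require Import structures.
From mathcomp Require Import all_boot all_algebra.
Set Implicit Arguments. Unset Strict Implicit. Unset Printing Implicit Defensive.
Import GRing.Theory.
Local Open Scope ring_scope.

Definition is_subgroup (G : zmodType) (H : G -> Prop) : Prop :=
  H 0 /\ (forall x y, H x -> H y -> H (x - y)).

Definition subgroup_le (G : zmodType) (H K : G -> Prop) : Prop :=
  forall x, H x -> K x.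

Definition direct_summand (G : zmodType) (K : G -> Prop) : Prop :=
  is_subgroup K /\
  exists L : G -> Prop, is_subgroup L /\
    (forall x, K x -> L x -> x = 0) /\
    (forall g, exists k l, K k /\ L l /\ g = k + l).

Definition essential_in (G : zmodType) (H K : G -> Prop) : Prop :=
  subgroup_le H K /\
  forall S : G -> Prop, is_subgroup S -> subgroup_le S K ->
    (exists s, S s /\ s <> 0) -> exists x, H x /\ S x /\ x <> 0.

(* There is an injective homomorphism G -> G/H.  The quotient G/H is
   given by any group Q with a surjective homomorphism pi : G -> Q whose
   kernel is exactly H (unique up to isomorphism). *)
Definition embeds_in_quotient (G : zmodType) (H : G -> Prop) : Prop :=
  exists (Q : zmodType) (pi : {additive G -> Q}) (phi : {additive G -> Q}),
    (forall q : Q, exists x, pi x = q) /\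
    (forall x, pi x = 0 <-> H x) /\
    injective phi.

Definition semi_gen_Bassian (G : zmodType) : Prop :=
  forall H : G -> Prop, is_subgroup H -> embeds_in_quotient H ->
    exists K : G -> Prop, direct_summand K /\ essential_in H K.

(* Main.v *)
Require Import Defs.
From HB Require Import structures.
From mathcomp Require Import all_boot all_algebra.
From mathcomp Require Import boolp.
From Stdlib Require Import ProofIrrelevance.
Set Implicit Arguments. Unset Strict Implicit. Unset Printing Implicit Defensive.
Import GRing.Theory.
Local Open Scope ring_scope.

Definition LT (G : zmodType) (L : G -> Prop) (hL : is_subgroup L) := {x : G | L x}.

Section LTsec.
Variables (G : zmodType) (L : G -> Prop) (hL : is_subgroup L).
Lemma LT_opp_proof (x : G) : L x -> L (- x).
Proof. by move=> Lx; rewrite -sub0r; apply: hL.2 => //; exact: hL.1. Qed.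
Lemma LT_add_proof (x y : G) : L x -> L y -> L (x + y).
Proof. by move=> Lx Ly; rewrite -[y]opprK; apply: hL.2 => //; exact: LT_opp_proof. Qed.
Definition LT0 : LT hL := exist _ 0 hL.1.
Definition LTopp (x : LT hL) : LT hL := exist _ (- proj1_sig x) (LT_opp_proof (proj2_sig x)).
Definition LTadd (x y : LT hL) : LT hL :=
  exist _ (proj1_sig x + proj1_sig y) (LT_add_proof (proj2_sig x) (proj2_sig y)).
Lemma LT_eq (x y : LT hL) : proj1_sig x = proj1_sig y -> x = y.
Proof. case: x y => [x px] [y py] /= e; subst y; by rewrite (proof_irrelevance _ px py). Qed.
End LTsec.

HB.instance Definition _ G L hL := gen_eqMixin (@LT G L hL).
HB.instance Definition _ G L hL := gen_choiceMixin (@LT G L hL).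
Section LTsec2.
Variables (G : zmodType) (L : G -> Prop) (hL : is_subgroup L).
Lemma LT_addA : associative (@LTadd G L hL).
Proof. by move=> x y z; apply: LT_eq; rewrite /= addrA. Qed.
Lemma LT_addC : commutative (@LTadd G L hL).
Proof. by move=> x y; apply: LT_eq; rewrite /= addrC. Qed.
Lemma LT_add0 : left_id (LT0 hL) (@LTadd G L hL).
Proof. by move=> x; apply: LT_eq; rewrite /= add0r. Qed.
Lemma LT_addN : left_inverse (LT0 hL) (@LTopp G L hL) (@LTadd G L hL).
Proof. by move=> x; apply: LT_eq; rewrite /= addNr. Qed.
End LTsec2.
HB.instance Definition _ G L hL := GRing.isZmodule.Build (@LT G L hL)
  (@LT_addA G L hL) (@LT_addC G L hL) (@LT_add0 G L hL) (@LT_addN G L hL).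

Lemma LT_valD G L hL (x y : @LT G L hL) : proj1_sig (x + y) = proj1_sig x + proj1_sig y.
Proof. by []. Qed.
Lemma LT_val0 G L hL : proj1_sig (0 : @LT G L hL) = 0.
Proof. by []. Qed.
Lemma LT_valN G L hL (x : @LT G L hL) : proj1_sig (- x) = - proj1_sig x.
Proof. by []. Qed.

Definition addw (U V : zmodType) (f : U -> V) (hf : GRing.zmod_morphism f) := f.
HB.instance Definition _ U V f hf := GRing.isZmodMorphism.Build U V (@addw U V f hf) hf.
Lemma mk_add0 (U V : zmodType) (f : U -> V) :
  (forall x y, f (x - y) = f x - f y) -> exists g : {additive U -> V}, forall x, g x = f x.
Proof. move=> hf; by exists (@addw U V f hf). Qed.

Section SG.
Variables (G : zmodType) (S : G -> Prop) (hS : is_subgroup S).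
Lemma sg0 : S 0. Proof. exact: hS.1. Qed.
Lemma sgB x y : S x -> S y -> S (x - y). Proof. exact: hS.2. Qed.
Lemma sgN x : S x -> S (- x).
Proof. by move=> Sx; rewrite -sub0r; apply: sgB => //; exact: sg0. Qed.
Lemma sgD x y : S x -> S y -> S (x + y).
Proof. by move=> Sx Sy; rewrite -[y]opprK; apply: sgB => //; exact: sgN. Qed.
Lemma sgMn x n : S x -> S (x *+ n).
Proof. move=> Sx; elim: n => [|n IH]; first exact: sg0. by rewrite mulrS; apply: sgD. Qed.
Lemma sgMz x z : S x -> S (x *~ z).
Proof. move=> Sx; case: z => n /=; first exact: sgMn. by rewrite NegzE mulrNz; apply/sgN/sgMn. Qed.
End SG.

Lemma proj_ex (G : zmodType) (K L : G -> Prop) : is_subgroup K -> is_subgroup L ->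
  (forall x, K x -> L x -> x = 0) -> (forall g, exists k l, K k /\ L l /\ g = k + l) ->
  exists p : G -> G, (forall x y, p (x - y) = p x - p y) /\ (forall g, K (p g)) /\
    (forall g, L (g - p g)) /\ (forall g, K g -> p g = g).
Proof.
move=> hK hL KL0 KLs.
have: forall g, exists k, K k /\ L (g - k).
  move=> g; case: (KLs g) => k [l [Kk [Ll ->]]]; exists k; split => //.
  by rewrite addrC addKr.
case/choice => p hp.
have uniq g k1 k2 : K k1 -> L (g - k1) -> K k2 -> L (g - k2) -> k1 = k2.
  move=> K1 L1 K2 L2; apply/eqP; rewrite -subr_eq0; apply/eqP; apply: KL0.
    exact: sgB.
  by have := sgB hL L2 L1; rewrite opprB addrC addrA subrK.
exists p; split; [|split; [|split]].
- move=> x y; apply: (uniq (x - y)); try by case: (hp (x - y)).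
    by apply: sgB; [exact: hK|case: (hp x)|case: (hp y)].
  have -> : x - y - (p x - p y) = (x - p x) - (y - p y).
    by rewrite !opprB addrACA [RHS]addrACA; congr (_ + _); rewrite addrC.
  by apply: sgB; [exact: hL|case: (hp x)|case: (hp y)].
- by move=> g; case: (hp g).
- by move=> g; case: (hp g).
- move=> g Kg; apply: (uniq g); try by case: (hp g).
  by rewrite subrr; exact: sg0.
Qed.

Lemma surj_aux (G : zmodType) (D Hs : G -> Prop) (f : {additive G -> G}) :
  is_subgroup D -> (forall x, D x -> D (f x)) -> (forall x, Hs x -> f x = 0) ->
  (forall x, D x -> x <> 0 -> exists n, (0 < n)%N /\ Hs (x *+ n) /\ x *+ n <> 0) ->
  forall y, D y -> exists x, D x /\ x + f x = y.
Proof.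
move=> hD Df fH ess.
have nil M : forall N, (0 < N)%N -> (N <= M)%N -> forall x, D x -> x *+ N = 0 ->
    exists k, iter k f x = 0.
  elim: M => [|M IH] N N0 NM x Dx xN; first by move: N0; rewrite leqn0 in NM; rewrite (eqP NM).
  have [->|x0] := eqVneq x 0; first by exists 0%N.
  have x0' : x <> 0 by apply/eqP.
  have [n [n0 [Hn xn0]]] := ess x Dx x0'.
  set g := gcdn N n.
  have fg : f x *+ g = 0.
    case: (egcdnP n N0) => km kn E _.
    have h1 : f x *+ (km * N) = 0 by rewrite mulnC mulrnA -(raddfMn f N x) xN raddf0 mul0rn.
    have h2 : f x *+ (kn * n) = 0 by rewrite mulnC mulrnA -(raddfMn f n x) fH // mul0rn.
    by move: h1; rewrite E mulrnDr h2 add0r.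
  have g0 : (0 < g)%N by rewrite gcdn_gt0 N0.
  have gN : (g < N)%N.
    rewrite ltn_neqAle dvdn_leq ?dvdn_gcdl // andbT; apply/eqP => gN.
    have /dvdnP [c cn] : (N %| n)%N by apply/gcdn_idPl.
    by apply: xn0; rewrite cn mulnC mulrnA xN mul0rn.
  have [k hk] := IH g g0 (leq_trans (leq_trans gN NM) (leqnn _)) (f x) (Df x Dx) fg.
  by exists k.+1; rewrite iterSr.
have main k : forall y, D y -> iter k f y = 0 -> exists x, D x /\ x + f x = y.
  elim: k => [|k IH] y Dy.
    by move=> /= ->; exists 0; split; [exact: sg0 | rewrite raddf0 addr0].
  rewrite iterSr => hk.
  have [x' [Dx' ex']] := IH (f y) (Df y Dy) hk.
  exists (y - x'); split; first exact: sgB.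
  by rewrite raddfB -ex' addrK subrK.
move=> y Dy; have [->|y0] := eqVneq y 0.
  by exists 0; split; [exact: sg0 | rewrite raddf0 addr0].
have y0' : y <> 0 by apply/eqP.
have [n [n0 [Hn yn0]]] := ess y Dy y0'.
have fyn : f y *+ n = 0 by rewrite -raddfMn fH.
have [k hk] := nil n n n0 (leqnn n) (f y) (Df y Dy) fyn.
by apply: (main k.+1) => //; rewrite iterSr.
Qed.

From Stdlib Require Import Classical.
Unset Implicit Arguments.

Theorem theorem2p5 (G : zmodType) (K : G -> Prop) (A : zmodType)
    (i : {additive A -> G}) :
  semi_gen_Bassian G -> direct_summand K ->
  injective i -> (forall g, K g <-> exists a, i a = g) ->
  semi_gen_Bassian A.
Proof.
move=> hG [hK [L [hL [KL0 KLs]]]] inj_i hKi H hH [Q [pi [phi [pi_surj [pi_ker phi_inj]]]]].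
have [p [p_add [pK [pL pid]]]] := proj_ex hK hL KL0 KLs.
have p0 : p 0 = 0 by move: (p_add 0 0); rewrite !subrr.
have pLz l : L l -> p l = 0.
  move=> Ll; apply: KL0 => //.
  by have := sgB hL Ll (pL l); rewrite opprB addrC subrK.
have [al hal] := @choice G A (fun g a => i a = p g) (fun g => (hKi _).1 (pK g)).
have al_add x y : al (x - y) = al x - al y.
  by apply: inj_i; rewrite raddfB !hal p_add.
have ali a : al (i a) = a.
  by apply: inj_i; rewrite hal pid //; apply/hKi; exists a.
pose Q' := (Q * LT hL)%type.
pose mk (q : {additive A -> Q}) (g : G) : Q' := (q (al g), exist _ (g - p g) (pL g)).
have mk_add (q : {additive A -> Q}) x y : mk q (x - y) = mk q x - mk q y.
  rewrite /mk; congr pair; first by rewrite al_add raddfB.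
  apply: LT_eq => /=; rewrite p_add.
  by rewrite !opprB addrACA [RHS]addrACA; congr (_ + _); rewrite addrC.
have [pi' hpi'] := mk_add0 (mk_add pi).
have [phi' hphi'] := mk_add0 (mk_add phi).
pose H' g := exists h, H h /\ i h = g.
have hH' : is_subgroup H'.
  split; first by exists 0; split; [exact: sg0 | exact: raddf0].
  move=> x y [h1 [Hh1 <-]] [h2 [Hh2 <-]]; exists (h1 - h2); split; [exact: sgB | exact: raddfB].
have emb : embeds_in_quotient H'.
  exists Q', pi', phi'; split; [|split].
  - case=> q [l Ll]; have [a <-] := pi_surj q.
    exists (i a + l); rewrite hpi' /mk.
    have e : al (i a + l) = a.
      have Kia : K (i a) by apply/hKi; exists a.
      have Lnl : L (- l) by exact: sgN.
      by apply: inj_i; rewrite hal -[l]opprK p_add (pLz _ Lnl) (pid _ Kia) subr0.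
    rewrite e; congr pair; apply: LT_eq => /=.
    by rewrite -hal e addrC addKr.
  - move=> x; rewrite hpi' /mk; split.
      move=> e; have /pi_ker Hx := congr1 fst e.
      have /= /eqP := congr1 (fun z => proj1_sig z.2) e; rewrite subr_eq0 => /eqP ex.
      by exists (al x); split => //; rewrite hal.
    case=> h [Hh <-]; rewrite ali; congr pair; first exact/pi_ker.
    apply: LT_eq => /=; rewrite pid ?subrr //; apply/hKi; by exists h.
  - move=> x y; rewrite !hphi' /mk => exy0.
    have /phi_inj e := congr1 fst exy0.
    have /= exy := congr1 (fun z => proj1_sig z.2) exy0.
    by rewrite -(subrK (p x) x) exy -!hal e subrK.
have [D [[hD [E [hE [DE0 DEs]]]] [H'D ess]]] := hG H' hH' emb.
have [r [r_add [rD [rE rid]]]] := proj_ex hD hE DE0 DEs.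
have r0 : r 0 = 0 by move: (r_add 0 0); rewrite !subrr.
have Kih h : K (i h) by apply/hKi; exists h.
have d_add x y : r (p (x - y)) - (x - y) = (r (p x) - x) - (r (p y) - y).
  by rewrite p_add r_add !opprB addrACA [RHS]addrACA; congr (_ + _); rewrite addrC.
have [d hd] := mk_add0 d_add.
have essn x : D x -> x <> 0 -> exists n, (0 < n)%N /\ H' (x *+ n) /\ x *+ n <> 0.
  move=> Dx x0; pose S y := exists z : int, y = x *~ z.
  have hS : is_subgroup S.
    split; first by exists 0; rewrite mulr0z.
    by move=> _ _ [z1 ->] [z2 ->]; exists (z1 - z2); rewrite mulrzBr.
  have SD : subgroup_le S D by move=> _ [z ->]; exact: sgMz.
  have Sx : exists s, S s /\ s <> 0 by exists x; split => //; exists 1; rewrite mulr1z.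
  have [y [H'y [[z yz] y0]]] := ess S hS SD Sx.
  case: z yz => n yz.
    exists n; rewrite pmulrn -yz; split => //.
    by case: n yz => // yz; rewrite yz mulr0z in y0.
  exists n.+1; split => //.
  have e : x *+ n.+1 = - y by rewrite yz NegzE mulrNz opprK pmulrn.
  rewrite e; split; first exact: sgN.
  by move/eqP; rewrite oppr_eq0 => /eqP.
have Dd x : D x -> D (d x) by move=> Dx; rewrite hd; apply: sgB.
have dH x : H' x -> d x = 0.
  case=> h [Hh <-]; rewrite hd pid // rid ?subrr //; apply: H'D; by exists h.
have surj := surj_aux hD Dd dH essn.
have injd x : D x -> r (p x) = 0 -> x = 0.
  move=> Dx rx; apply: NNPP => x0.
  pose S y := D y /\ r (p y) = 0.
  have hS : is_subgroup S.
    split; first by split; [exact: sg0 | rewrite p0 r0].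
    by move=> y1 y2 [D1 r1] [D2 r2]; split; [exact: sgB | rewrite p_add r_add r1 r2 subrr].
  have [y [[h [Hh <-]] [[Dy ry] y0]]] := ess S hS (fun y hy => proj1 hy) (ex_intro _ x (conj (conj Dx rx) x0)).
  by apply: y0; rewrite -ry pid // rid.
pose K' a := exists x, D x /\ i a = p x.
pose L' a := r (i a) = 0.
have hK' : is_subgroup K'.
  split; first by exists 0; split; [exact: sg0 | rewrite p0 raddf0].
  move=> a b [x [Dx ex]] [y [Dy ey]]; exists (x - y); split; first exact: sgB.
  by rewrite raddfB p_add ex ey.
have hL' : is_subgroup L'.
  split; first by rewrite /L' raddf0 r0.
  by move=> a b ra rb; rewrite /L' raddfB r_add ra rb subrr.
exists K'; split.
  split => //; exists L'; split => //; split.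
    move=> a [x [Dx ex]] ra; apply: inj_i; rewrite raddf0.
    rewrite ex (injd x Dx) ?p0 //; by rewrite -ex.
  move=> a; have [x [Dx ex]] := surj (r (i a)) (rD _).
  rewrite hd addrC subrK in ex.
  exists (al x), (a - al x); split; first by exists x; split => //; rewrite hal.
  split; last by rewrite addrC subrK.
  by rewrite /L' raddfB r_add hal ex subrr.
split.
  move=> h Hh; exists (i h); split; last by rewrite pid.
  by apply: H'D; exists h.
move=> S hS SK [s [Ss s0]].
pose S' g := D g /\ exists a, S a /\ i a = p g.
have hS' : is_subgroup S'.
  split; first by split; [exact: sg0 | exists 0; split; [exact: sg0 | rewrite raddf0 p0]].
  move=> x y [Dx [a [Sa ea]]] [Dy [b [Sb eb]]]; split; first exact: sgB.
  by exists (a - b); split; [exact: sgB | rewrite raddfB p_add ea eb].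
have [x [Dx ex]] := SK s Ss.
have x0 : x <> 0 by move=> x0; apply: s0; apply: inj_i; rewrite ex x0 p0 raddf0.
have [y [[h [Hh <-]] [[Dy [a [Sa ea]]] y0]]] :=
  ess S' hS' (fun y hy => proj1 hy) (ex_intro _ x (conj (conj Dx (ex_intro _ s (conj Ss ex))) x0)).
rewrite pid // in ea; have eah := inj_i _ _ ea; subst a.
exists h; split => //; split => //.
by move=> h0; apply: y0; rewrite h0 raddf0.
Qed.
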